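(* Let $A\in\mathbb{R}^{n\times n}$, $B\in\mathbb{R}^{n\times m}$, let $N\geq n+m$, and for $i=1,\dots,N$ let $x_{i,1},x_{i,2}\in\mathbb{R}^{n}$, $u_{i,1}\in\mathbb{R}^{m}$ satisfy $x_{i,2}=Ax_{i,1}+Bu_{i,1}$. Put $X_{N,1}:=(x_{1,1},\dots,x_{N,1})^{\top}$, $X_{N,2}:=(x_{1,2},\dots,x_{N,2})^{\top}$ (both in $\mathbb{R}^{N\times n}$), $U_{N,1}:=(u_{1,1},\dots,u_{N,1})^{\top}\in\mathbb{R}^{N\times m}$, and $Z_{N,2}:=X_{N,1}A$. Suppose that $\operatorname{rank}\begin{pmatrix}X_{N,1} & U_{N,1}\end{pmatrix}=n+m$, $\operatorname{rank}X_{N,1}=n$, and $\operatorname{rank}U_{N,1}=m$. Then: (i) the equation $X_{N,1}U_{B_{N,1}}^{\top}=X_{N,1}X_{N,2}^{\top}-Z_{N,2}X_{N,1}^{\top}$ in the unknown $U_{B_{N,1}}\in\mathbb{R}^{N\times n}$ has the unique solution $U_{B_{N,1}}=U_{N,1}B^{\top}$; (ii) for every $S\in\mathbb{R}^{n\times r}$, with $U_{B_{N,1}}=U_{N,1}B^{\top}$, the equation $U_{N,1}S_{B}=U_{B_{N,1}}S$ in the unknown $S_{B}\in\mathbb{R}^{m\times r}$ has the unique solution $S_{B}=B^{\top}S$. *)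

(* Defs.v *)
From HB Require Import structures.
From mathcomp Require Export all_boot all_order all_algebra.
From mathcomp Require Export reals.
Set Implicit Arguments. Unset Strict Implicit. Unset Printing Implicit Defensive.
Export Order.TTheory GRing.Theory Num.Theory.
Local Open Scope ring_scope.

(* stack v = (v_1, ..., v_N)^T : the N x k matrix whose i-th row is v_i^T *)
Definition stack (R : Type) (N k : nat) (v : 'I_N -> 'cV[R]_k) : 'M[R]_(N, k) :=
  \matrix_(i < N, j < k) v i j 0.

(* Main.v *)
Require Import Defs.
Local Open Scope ring_scope.

Lemma cancel_full (R : realType) (N k p : nat) (M : 'M[R]_(N, k)) (P Q : 'M[R]_(k, p)) :
  \rank M = k -> M *m P = M *m Q -> P = Q.
Proof.
move=> hr e.
have hf : row_free M^T by rewrite /row_free mxrank_tr hr.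
have : P^T *m M^T = Q^T *m M^T by rewrite -!trmx_mul e.
by move/(row_free_inj hf)/(congr1 trmx); rewrite !trmxK.
Qed.

Theorem lemma3 (R : realType) (n m N : nat)
  (A : 'M[R]_n) (B : 'M[R]_(n, m))
  (x1 x2 : 'I_N -> 'cV[R]_n) (u1 : 'I_N -> 'cV[R]_m)
  (hN : (n + m <= N)%N)
  (hdyn : forall i : 'I_N, x2 i = A *m x1 i + B *m u1 i)
  (hrankXU : \rank (row_mx (stack x1) (stack u1)) = (n + m)%N)
  (hrankX : \rank (stack x1) = n)
  (hrankU : \rank (stack u1) = m) :
  let X1 := stack x1 in
  let X2 := stack x2 in
  let U1 := stack u1 in
  let Z2 := X1 *m A in
  (forall UB : 'M[R]_(N, n),
      X1 *m UB^T = X1 *m X2^T - Z2 *m X1^T <-> UB = U1 *m B^T) /\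
  (forall (r : nat) (S : 'M[R]_(n, r)) (SB : 'M[R]_(m, r)),
      U1 *m SB = (U1 *m B^T) *m S <-> SB = B^T *m S).
Proof.
move=> X1 X2 U1 Z2.
have hX2 : X2 = X1 *m A^T + U1 *m B^T.
  apply/matrixP=> i j; rewrite /X2 /X1 /U1 /stack !mxE hdyn !mxE.
  congr (_ + _); apply: eq_bigr => k _; rewrite !mxE mulrC //.
have hR : X1 *m X2^T - Z2 *m X1^T = X1 *m (U1 *m B^T)^T.
  rewrite hX2 /Z2 linearD /= mulmxDr !trmx_mul trmxK mulmxA addrC addKr.
  by [].
split.
  move=> UB; rewrite hR; split.
    by move/(@cancel_full _ _ _ _ X1 _ _ hrankX)/(congr1 trmx); rewrite !trmxK.
  by move->.
move=> r S SB; split; last by move->; rewrite mulmxA.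
by rewrite -mulmxA; move/(@cancel_full _ _ _ _ U1 _ _ hrankU).
Qed.
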